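(* Let $F$ be a clause-set and $v$ a singular variable for $F$, with singular literal $x$, main clause $C$ and side clauses $D_1,\dots,D_m$. Let $C' := C\setminus\{x\}$ and $D_i' := D_i\setminus\{\overline{x}\}$. Then the following are equivalent: 1. $F$ is saturated minimally unsatisfiable. 2. All of the following hold: (a) $\mathrm{DP}_v(F)$ is saturated minimally unsatisfiable; (b) $C' = \bigcap_{i=1}^m D_i'$; (c) for every $E\in F$ with $v\notin\mathrm{var}(E)$ we have $C'\not\subseteq E$.
   Context: Literals are variables $v$ and complements $\overline{v}$; a clause is a finite set of literals with no complementary pair; a clause-set is a finite set of clauses; $\mathrm{var}(F)$ is the set of variables of $F$; $\mathrm{ldeg}_F(x)$ is the number of clauses of $F$ containing literal $x$. $\mathrm{DP}_v(F) := \{C \in F : v \notin \mathrm{var}(C)\} \cup \{(C \cup D)\setminus\{v,\overline{v}\} : C, D \in F,\ C \cap \overline{D} = \{v\}\}$. A clause-set is minimally unsatisfiable if it is unsatisfiable and each proper subset is satisfiable; a minimally unsatisfiable $F$ is saturated if for every $C \in F$ and every literal $y$ with $\mathrm{var}(y) \in \mathrm{var}(F)\setminus \mathrm{var}(C)$, the clause-set $(F\setminus\{C\})\cup\{C\cup\{y\}\}$ is satisfiable. A variable $v$ is singular for $F$ if $\min(\mathrm{ldeg}_F(v),\mathrm{ldeg}_F(\overline{v}))=1$; a singular literal for $v$ is a literal $x$ with $\mathrm{var}(x)=v$ and $\mathrm{ldeg}_F(x)=1$ (one chosen if both polarities qualify); the main clause is the clause containing $x$, the side clauses are the clauses containing $\overline{x}$.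 *)

(* Defs.v *)
From HB Require Import structures.
From mathcomp Require Import all_boot all_order.
From mathcomp Require Import finmap.
Set Implicit Arguments. Unset Strict Implicit. Unset Printing Implicit Defensive.
Local Open Scope fset_scope.

Section Clauses.
Variable V : choiceType.

(* A literal is a pair (v, b): (v, true) is the positive literal v,
   (v, false) is the complement  overline{v}. *)
Definition lit := (V * bool)%type.
Definition var (x : lit) : V := x.1.
Definition compl (x : lit) : lit := (x.1, ~~ x.2).
Definition pos (v : V) : lit := (v, true).
Definition neg (v : V) : lit := (v, false).

Definition clause := {fset lit}.
Definition cset := {fset clause}.

Definition is_clause (C : clause) : Prop := forall x, x \in C -> compl x \notin C.
Definition is_clause_set (F : cset) : Prop := forall C, C \in F -> is_clause C.

Definition varC (C : clause) : {fset V} := [fset var x | x in C].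
Definition varF (F : cset) : {fset V} := \bigcup_(C <- F) varC C.

Definition ldeg (F : cset) (x : lit) : nat := #|` [fset C in F | x \in C] |.

Definition complC (D : clause) : clause := [fset compl x | x in D].

Definition DP (v : V) (F : cset) : cset :=
  [fset C in F | v \notin varC C] `|`
  [fset (C `|` D) `\` [fset pos v; neg v]
     | C in F, D in [fset D in F | C `&` complC D == [fset pos v]]].

Definition satisfies (phi : V -> bool) (F : cset) : Prop :=
  forall C, C \in F -> exists2 x, x \in C & phi (var x) = x.2.
Definition satisfiable (F : cset) : Prop := exists phi, satisfies phi F.

Definition minimally_unsat (F : cset) : Prop :=
  ~ satisfiable F /\ forall G : cset, G `<` F -> satisfiable G.

Definition saturated_MU (F : cset) : Prop :=
  minimally_unsat F /\
  forall C y, C \in F -> var y \in varF F -> var y \notin varC C ->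
    satisfiable ((F `\ C) `|` [fset C `|` [fset y]]).

Definition singular (F : cset) (v : V) : Prop :=
  minn (ldeg F (pos v)) (ldeg F (neg v)) = 1%N.

End Clauses.

(* Main.v *)
Require Import Defs.
From mathcomp Require Import all_boot all_order.
From mathcomp Require Import finmap.
From Stdlib Require Import Classical.
Set Implicit Arguments. Unset Strict Implicit. Unset Printing Implicit Defensive.
Local Open Scope fset_scope.

Section Gen.
Variable V : choiceType.
Implicit Types (F G : cset V) (K : clause V) (phi : V -> bool).

Definition satc phi K := exists2 z, z \in K & phi (var z) = z.2.

Lemma satc_sub phi K1 K2 : K1 `<=` K2 -> satc phi K1 -> satc phi K2.
Proof. move=> /fsubsetP s [z zK e]; exists z => //; exact: s. Qed.

Lemma unsat_del F K phi : ~ satisfiable F -> K \in F -> satisfies phi (F `\ K) -> ~ satc phi K.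
Proof.
move=> U KF S sK; apply: U; exists phi => E EF.
case: (eqVneq E K) => [->|ne]; first by case: sK => z; exists z.
apply: S; by rewrite in_fsetD1 ne EF.
Qed.

Lemma mu_del F K : minimally_unsat F -> K \in F -> satisfiable (F `\ K).
Proof. move=> [_ M] KF; apply: M; exact: fproperD1. Qed.

Lemma mu_make F : ~ satisfiable F -> (forall K, K \in F -> satisfiable (F `\ K)) -> minimally_unsat F.
Proof.
move=> U H; split=> // G; rewrite fproperE => /andP[sGF /fsubsetPn [K KF KG]].
case: (H K KF) => phi S; exists phi => E EG; apply: S.
rewrite in_fsetD1 (fsubsetP sGF _ EG) andbT; apply/eqP => eEK.
by rewrite -eEK EG in KG.
Qed.

Lemma sat_use F K y : saturated_MU F -> K \in F -> var y \in varF F -> var y \notin varC K ->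
  exists phi, satisfies phi (F `\ K) /\ phi (var y) = y.2.
Proof.
move=> [[U _] Sat] KF yF yK; case: (Sat K y KF yF yK) => phi S.
have S1 : satisfies phi (F `\ K) by move=> E EF; apply: S; rewrite in_fsetU EF.
exists phi; split => //.
have := S (K `|` [fset y]); rewrite in_fsetU in_fset1 eqxx orbT => /(_ isT) [z].
rewrite in_fsetU in_fset1 => /orP[zK|/eqP->] e //.
exfalso; apply: (unsat_del U KF S1); by exists z.
Qed.

Lemma sat_make F K y phi : satisfies phi (F `\ K) -> phi (var y) = y.2 ->
  satisfiable ((F `\ K) `|` [fset K `|` [fset y]]).
Proof.
move=> S e; exists phi => E; rewrite in_fsetU in_fset1 => /orP[EF|/eqP->]; first exact: S.
exists y => //; by rewrite in_fsetU in_fset1 eqxx orbT.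
Qed.

Lemma varCP w K : w \in varC K <-> exists2 z, z \in K & var z = w.
Proof.
rewrite /varC; split => [/imfsetP [z zK ->]|[z zK <-]]; first by exists z.
apply/imfsetP; by exists z.
Qed.

Lemma varFP w F : w \in varF F <-> exists2 K, K \in F & w \in varC K.
Proof.
rewrite /varF; split => [/bigfcupP [K /andP[KF _] wK]|[K KF wK]]; first by exists K.
apply/bigfcupP; exists K => //; by rewrite KF.
Qed.

Lemma compl_invol (y : lit V) : compl (compl y) = y.
Proof. case: y => a b; by rewrite /compl /= negbK. Qed.

Lemma lit_eqv (x y : lit V) : var y = var x -> y = x \/ y = compl x.
Proof. case: x => a b; case: y => c d; rewrite /var /compl /= => ->. case: b; case: d; auto. Qed.

Lemma compl_neq (y : lit V) : compl y <> y.
Proof. case: y => a [] //. Qed.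

Lemma complC_mem (D : clause V) z : (z \in complC D) = (compl z \in D).
Proof.
apply/imfsetP/idP => [[w wD ->]|h]; first by rewrite compl_invol.
exists (compl z) => //; by rewrite compl_invol.
Qed.

End Gen.

Lemma lit_tf (V : choiceType) (phi : V -> bool) (y : lit V) :
  phi (var y) != y.2 -> phi (var (compl y)) = (compl y).2.
Proof. rewrite /compl /var /=; by case: (phi y.1); case: y.2. Qed.

Lemma var_pn (V : choiceType) (v : V) (y : lit V) :
  (y \in [fset pos v; neg v]) = (var y == v).
Proof.
rewrite in_fset2; case: y => a b; rewrite /pos /neg /var /=.
by case: b; rewrite ?xpair_eqE /= ?andbT ?andbF ?orbF.
Qed.

Section Main.
Variables (V : choiceType) (F : cset V) (v : V) (x : lit V) (C : clause V).
Hypotheses (Hcl : is_clause_set F) (Hsing : singular F v) (Hxv : var x = v)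
  (Hdeg : ldeg F x = 1%N) (HC : C \in F) (HxC : x \in C).

Implicit Types (D K E : clause V) (phi : V -> bool).
Definition Cp := C `\ x.
Definition Dp (D : clause V) := D `\ compl x.
Definition upd (phi : V -> bool) (b : bool) : V -> bool := fun w => if w == v then b else phi w.

Lemma var_cx : var (compl x) = v.
Proof. exact: Hxv. Qed.

Lemma xE : x = (v, x.2).
Proof. by move: Hxv; case: x => a b /= <-. Qed.

Lemma uniqC K : K \in F -> x \in K -> K = C.
Proof.
move=> KF xK; move: Hdeg; rewrite /ldeg => /eqP /cardfs1P [c0 e].
have hC : C \in [fset K0 in F | x \in K0] by rewrite !inE /= HC HxC.
have hK : K \in [fset K0 in F | x \in K0] by rewrite !inE /= KF xK.
by move: hC hK; rewrite e !in_fset1 => /eqP -> /eqP ->.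
Qed.

Lemma exS : exists2 D, D \in F & compl x \in D.
Proof.
case: (fset0Pn [fset K0 in F | compl x \in K0]) => [[D]|h].
  by rewrite !inE /= => /andP[DF xD]; exists D.
exfalso; have h0 : ldeg F (compl x) = 0%N.
  rewrite /ldeg; apply/eqP; rewrite cardfs_eq0; apply/negPn/negP => /fset0Pn; exact: h.
move: Hsing h0 Hdeg; rewrite /singular xE /compl /pos /neg /=.
by case: x.2 => /= m h1 _; rewrite h1 ?minn0 ?min0n in m.
Qed.

Lemma nxC : compl x \notin C.
Proof. exact: Hcl HC x HxC. Qed.

Lemma side_nx D : D \in F -> compl x \in D -> x \notin D.
Proof. move=> DF xD; apply/negP => xD'; move: xD; by rewrite (uniqC DF xD') (negbTE nxC). Qed.

Lemma side_neqC D : compl x \in D -> D != C.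
Proof. move=> xD; apply/eqP => e; move: xD; by rewrite e (negbTE nxC). Qed.

Lemma Dp_mem D y : D \in F -> compl x \in D -> (y \in Dp D) = (y \in D) && (var y != v).
Proof.
move=> DF xD; rewrite /Dp in_fsetD1 andbC; apply/andP/andP => [[yD ny]|[yD nv]]; split => //.
  apply/eqP => e; case: (lit_eqv (etrans e (esym Hxv))) => [ex|ex].
   by move: yD; rewrite ex (negbTE (side_nx DF xD)).
  by rewrite ex eqxx in ny.
by apply/eqP => e; move: nv; rewrite e; change (var (compl x)) with (var x); rewrite Hxv eqxx.
Qed.

Lemma Cp_mem y : (y \in Cp) = (y \in C) && (var y != v).
Proof.
rewrite /Cp in_fsetD1 andbC; apply/andP/andP => [[yC ny]|[yC nv]]; split => //.
  apply/eqP => e; case: (lit_eqv (etrans e (esym Hxv))) => [ex|ex].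
   by rewrite ex eqxx in ny.
  by move: yC; rewrite ex (negbTE nxC).
by apply/eqP => e; move: nv; rewrite e Hxv eqxx.
Qed.

Lemma part K : K \in F -> K = C \/ compl x \in K \/ v \notin varC K.
Proof.
move=> KF; case: (boolP (v \in varC K)) => [/varCP [z zK zv]|]; last by auto.
case: (lit_eqv (etrans zv (esym Hxv))) => ez; rewrite ez in zK; last by auto.
by left; apply: uniqC.
Qed.

Lemma vC : v \in varC C.
Proof. apply/varCP; by exists x. Qed.

Lemma vside D : compl x \in D -> v \in varC D.
Proof. move=> h; apply/varCP; by exists (compl x). Qed.

Lemma nov_F0 K z : v \notin varC K -> z \in K -> var z != v.
Proof. move=> h zK; apply/eqP => e; move: h; rewrite -e; apply/negP/negPn/varCP; by exists z. Qed.

Lemma upd_nov phi b K : (forall z, z \in K -> var z != v) -> satc (upd phi b) K <-> satc phi K.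
Proof.
move=> H; split=> [[z zK e]|[z zK e]]; exists z => //; move: e; by rewrite /upd (negbTE (H z zK)).
Qed.

Lemma upd_x phi K : x \in K -> satc (upd phi x.2) K.
Proof. move=> h; exists x => //; by rewrite /upd Hxv eqxx. Qed.

Lemma upd_nx phi K : compl x \in K -> satc (upd phi (~~ x.2)) K.
Proof. move=> h; exists (compl x) => //; rewrite /upd; change (var (compl x)) with (var x); by rewrite Hxv eqxx. Qed.

Lemma upd_v phi b : upd phi b v = b.
Proof. by rewrite /upd eqxx. Qed.

Lemma upd_Cp phi b : satc (upd phi b) Cp <-> satc phi Cp.
Proof. apply: upd_nov => z; rewrite Cp_mem => /andP[]. done. Qed.

Lemma upd_Dp phi b D : D \in F -> compl x \in D -> satc (upd phi b) (Dp D) <-> satc phi (Dp D).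
Proof. move=> DF xD; apply: upd_nov => z; rewrite Dp_mem // => /andP[]. done. Qed.

Lemma Cp_sub : Cp `<=` C.
Proof. exact: fsubD1set. Qed.

Lemma Dp_sub D : Dp D `<=` D.
Proof. exact: fsubD1set. Qed.

Lemma D_of_sat phi D : D \in F -> compl x \in D -> satc phi D -> phi v = x.2 -> satc phi (Dp D).
Proof.
move=> DF xD [z zD e] pv; exists z => //; rewrite /Dp in_fsetD1 zD andbT.
apply/eqP => ez; move: e; rewrite ez var_cx pv /=; by case: (x.2).
Qed.

Lemma Cp_of_sat phi : satc phi C -> phi v = ~~ x.2 -> satc phi Cp.
Proof.
move=> [z zC e] pv; exists z => //; rewrite /Cp in_fsetD1 zC andbT.
apply/eqP => ez; move: e; rewrite ez Hxv pv; by case: x.2.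
Qed.


Lemma L1 phi D : ~ satisfiable F -> D \in F -> compl x \in D -> satisfies phi (F `\ D) -> ~ satc phi Cp.
Proof.
move=> U DF xD S sC; apply: U; exists (upd phi (~~ x.2)) => K KF.
case: (part KF) => [->|[xK|nK]].
- apply: (satc_sub Cp_sub); by apply/upd_Cp.
- exact: upd_nx.
- apply/(upd_nov _ _ (fun z zK => nov_F0 nK zK)); apply: S; rewrite in_fsetD1 KF andbT.
  apply/eqP => e; move: nK; by rewrite e (vside xD).
Qed.

Lemma b1 y D : saturated_MU F -> y \in Cp -> D \in F -> compl x \in D -> y \in Dp D.
Proof.
move=> SF yC DF xD; have [MU _] := SF; have [U M] := MU.
move: (yC); rewrite Cp_mem => /andP[yC0 nv].
rewrite Dp_mem // nv andbT; apply/negPn/negP => nyD.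
case: (boolP (compl y \in D)) => cyD.
- case: (mu_del MU DF) => phi S; apply: (L1 U DF xD S).
  exists y => //; have nsD := unsat_del U DF S.
  case: (boolP (phi (var y) == y.2)) => [/eqP //|ne]; exfalso; apply: nsD.
  exists (compl y) => //; exact: lit_tf.
- have nvD : var y \notin varC D.
    apply/negP => /varCP [z zD ez]; case: (lit_eqv ez) => e; move: zD; rewrite e => h.
     by rewrite h in nyD.
    by rewrite h in cyD.
  have yF : var y \in varF F by apply/varFP; exists C => //; apply/varCP; exists y.
  case: (sat_use SF DF yF nvD) => phi [S e]; apply: (L1 U DF xD S); by exists y.
Qed.

Lemma b2 y : saturated_MU F -> (forall D, D \in F -> compl x \in D -> y \in Dp D) -> y \in Cp.
Proof.
move=> SF H; have [MU _] := SF; have [U M] := MU; case: exS => D0 D0F xD0.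
have := H D0 D0F xD0; rewrite Dp_mem // => /andP[yD0 nv].
rewrite Cp_mem nv andbT; apply/negPn/negP => nyC.
case: (boolP (compl y \in C)) => cyC.
- have : compl y \in Cp by rewrite Cp_mem cyC; exact: nv.
  move=> /(b1 SF) /(_ D0F xD0); rewrite Dp_mem // => /andP[cyD0 _].
  by move: (Hcl D0F yD0); rewrite cyD0.
- have nvC : var y \notin varC C.
    apply/negP => /varCP [z zC ez]; case: (lit_eqv ez) => e; move: zC; rewrite e => h.
     by rewrite h in nyC.
    by rewrite h in cyC.
  have yF : var y \in varF F by apply/varFP; exists D0 => //; apply/varCP; exists y.
  case: (sat_use SF HC yF nvC) => phi [S e]; apply: U; exists (upd phi x.2) => K KF.
  case: (part KF) => [->|[xK|nK]].
  + exact: upd_x.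
  + exists y; first by move: (H K KF xK); rewrite Dp_mem // => /andP[].
    by rewrite /upd (negbTE nv).
  + apply/(upd_nov _ _ (fun z zK => nov_F0 nK zK)); apply: S; rewrite in_fsetD1 KF andbT.
    apply/eqP => eK; move: nK; by rewrite eK vC.
Qed.

Lemma c1 E : saturated_MU F -> E \in F -> v \notin varC E -> Cp `<=` E -> False.
Proof.
move=> SF EF nE sub; have [MU _] := SF; have [U M] := MU.
have vF : var (compl x) \in varF F by rewrite var_cx; apply/varFP; exists C => //; exact vC.
have nE' : var (compl x) \notin varC E by rewrite var_cx.
case: (sat_use SF EF vF nE') => phi [S e].
rewrite var_cx in e.
apply: (unsat_del U EF S); apply: (satc_sub sub); apply: Cp_of_sat => //.
apply: S; rewrite in_fsetD1 HC andbT; apply/eqP => eC; move: nE; by rewrite -eC vC.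
Qed.

Section Sub.
Hypothesis Hb : forall D, D \in F -> compl x \in D -> Cp `<=` Dp D.

Lemma res_eq D : D \in F -> compl x \in D -> (C `|` D) `\` [fset pos v; neg v] = Dp D.
Proof.
move=> DF xD; apply/fsetP => y; rewrite in_fsetD var_pn in_fsetU Dp_mem //.
apply/andP/andP => [[nv /orP[yC|yD]]|[yD nv]]; split => //.
- have : y \in Cp by rewrite Cp_mem yC.
  by move=> /(fsubsetP (Hb DF xD)); rewrite Dp_mem // => /andP[].
- by rewrite yD orbT.
Qed.

Lemma clash D z : D \in F -> compl x \in D -> z \in C -> compl z \in D -> z = x.
Proof.
move=> DF xD zC czD; case: (boolP (var z == v)) => [/eqP e|nv].
- case: (lit_eqv (etrans e (esym Hxv))) => // ez; by move: zC; rewrite ez (negbTE nxC).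
- have : z \in Cp by rewrite Cp_mem zC.
  move=> /(fsubsetP (Hb DF xD)); rewrite Dp_mem // => /andP[zD _].
  by move: (Hcl DF zD); rewrite czD.
Qed.

Lemma dp_mem K : K \in DP v F <->
  (K \in F /\ v \notin varC K) \/ exists2 D, (D \in F /\ compl x \in D) & K = Dp D.
Proof.
rewrite /DP in_fsetU; split.
- move=> /orP[|/imfset2P [C0 C0F [D]]].
  + rewrite !inE /= => /andP[KF nK]; by left.
  + rewrite !inE /= => /andP[DF /eqP hI] ->; right.
    have : pos v \in C0 `&` complC D by rewrite hI in_fset1.
    rewrite in_fsetI complC_mem => /andP[pC0 nD].
    have xe := xE; case ex2 : (x.2) in xe.
    * have eC0 : C0 = C by apply: uniqC => //; rewrite xe.
      have xD : compl x \in D by rewrite xe.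
      exists D => //; by rewrite eC0 res_eq.
    * have eD : D = C by apply: uniqC => //; rewrite xe.
      have xC0 : compl x \in C0 by rewrite xe.
      exists C0 => //; by rewrite eD fsetUC res_eq.
- move=> [[KF nK]|[D [DF xD] ->]].
  + apply/orP; left; by rewrite !inE /= KF nK.
  + apply/orP; right; apply/imfset2P.
    have xe := xE; case ex2 : (x.2) in xe.
    * exists C => //; exists D; last by rewrite res_eq.
      rewrite !inE /= DF /=; apply/eqP/fsetP => z; rewrite in_fsetI complC_mem in_fset1.
      apply/andP/eqP => [[zC czD]|->]; first by rewrite (clash DF xD zC czD) xe.
      by rewrite /pos -xe.
    * exists D => //; exists C; last by rewrite fsetUC res_eq.
      rewrite !inE /= HC /=; apply/eqP/fsetP => z; rewrite in_fsetI complC_mem in_fset1.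
      apply/andP/eqP => [[zD czC]|->].
       have := clash DF xD czC; rewrite compl_invol => /(_ zD) e.
       by rewrite -(compl_invol z) e xe.
      split; first by move: xD; rewrite xe.
      by move: HxC; rewrite xe.
Qed.

Lemma varDP1 w : w \in varF (DP v F) -> w != v /\ w \in varF F.
Proof.
move=> /varFP [K KD /varCP [z zK <-]]; case/dp_mem: KD => [[KF nK]|[D [DF xD] eK]].
- split; first exact: nov_F0 nK zK.
  apply/varFP; exists K => //; apply/varCP; by exists z.
- move: zK; rewrite eK Dp_mem // => /andP[zD nv]; split => //.
  apply/varFP; exists D => //; apply/varCP; by exists z.
Qed.

Lemma varDP2 w : w \in varF F -> w != v -> w \in varF (DP v F).
Proof.
move=> /varFP [K KF /varCP [z zK ez]] nv; case: exS => D0 D0F xD0.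
rewrite -ez in nv *.
case: (part KF) => [eK|[xK|nK]].
- apply/varFP; exists (Dp D0); first by apply/dp_mem; right; exists D0.
  apply/varCP; exists z => //; apply: (fsubsetP (Hb D0F xD0)); by rewrite Cp_mem -eK zK.
- apply/varFP; exists (Dp K); first by apply/dp_mem; right; exists K.
  apply/varCP; exists z => //; by rewrite Dp_mem // zK.
- apply/varFP; exists K; first by apply/dp_mem; left.
  apply/varCP; by exists z.
Qed.

End Sub.

Lemma Dp_inj D1 D2 : compl x \in D1 -> compl x \in D2 -> Dp D1 = Dp D2 -> D1 = D2.
Proof. move=> x1 x2 e; rewrite -(fsetD1K x1) -(fsetD1K x2); by move: e; rewrite /Dp => ->. Qed.


Lemma Hb_of : saturated_MU F -> forall D, D \in F -> compl x \in D -> Cp `<=` Dp D.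
Proof. move=> SF D DF xD; apply/fsubsetP => y yC; exact: b1. Qed.

Lemma DPdel0 (Hb : forall D, D \in F -> compl x \in D -> Cp `<=` Dp D) phi K :
  K \in F -> v \notin varC K -> satisfies phi (F `\ K) -> satisfies phi (DP v F `\ K).
Proof.
move=> KF nK S E; rewrite in_fsetD1 => /andP[nEK /(dp_mem Hb)[[EF nE]|[D [DF xD] eE]]].
- apply: S; by rewrite in_fsetD1 nEK EF.
- have sD : satc phi D.
    apply: S; rewrite in_fsetD1 DF andbT; apply/eqP => e; move: nK; by rewrite -e (vside xD).
  rewrite eE; case: (boolP (phi v == x.2)) => [/eqP pv|pv].
  + exact: D_of_sat.
  + apply: (satc_sub (Hb _ DF xD)); apply: Cp_of_sat.
     apply: S; rewrite in_fsetD1 HC andbT; apply/eqP => e; move: nK; by rewrite -e vC.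
    by move: pv; case: (phi v); case: (x.2).
Qed.

Lemma DPdel1 (Hb : forall D, D \in F -> compl x \in D -> Cp `<=` Dp D) phi D0 :
  ~ satisfiable F -> D0 \in F -> compl x \in D0 -> satisfies phi (F `\ D0) ->
  satisfies phi (DP v F `\ Dp D0).
Proof.
move=> U D0F xD0 S.
have nC := L1 U D0F xD0 S.
have sC : satc phi C by apply: S; rewrite in_fsetD1 HC andbT eq_sym (side_neqC xD0).
have pv : phi v = x.2.
  case: (boolP (phi v == x.2)) => [/eqP //|ne]; exfalso; apply: nC; apply: Cp_of_sat => //.
  by move: ne; case: (phi v); case: (x.2).
move=> E; rewrite in_fsetD1 => /andP[nEK /(dp_mem Hb)[[EF nE]|[D [DF xD] eE]]].
- apply: S; rewrite in_fsetD1 EF andbT; apply/eqP => e; move: nE; by rewrite e (vside xD0).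
- rewrite eE; apply: D_of_sat => //; apply: S; rewrite in_fsetD1 DF andbT.
  apply/eqP => e; move: nEK; by rewrite eE e eqxx.
Qed.

Lemma fwd : saturated_MU F -> saturated_MU (DP v F).
Proof.
move=> SF; have [MU _] := SF; have [U M] := MU; have Hb := Hb_of SF.
have UD : ~ satisfiable (DP v F).
  move=> [phi S]; apply: U; exists (upd phi x.2) => K KF.
  case: (part KF) => [->|[xK|nK]].
  - exact: upd_x.
  - apply: (satc_sub (Dp_sub K)); apply/(upd_Dp _ _ KF xK); apply: S.
    apply/(dp_mem Hb); right; by exists K.
  - apply/(upd_nov _ _ (fun z zK => nov_F0 nK zK)); apply: S; apply/(dp_mem Hb); by left.
split.
  apply: mu_make => // K /(dp_mem Hb) [[KF nK]|[D0 [D0F xD0] ->]].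
  - case: (mu_del MU KF) => phi S; exists phi; exact: DPdel0.
  - case: (mu_del MU D0F) => phi S; exists phi; exact: DPdel1.
move=> K y KD yD nyK; have [nv yF] := varDP1 Hb yD.
case/(dp_mem Hb): KD => [[KF nK]|[D0 [D0F xD0] eK]].
- case: (sat_use SF KF yF nyK) => phi [S e]; apply: (sat_make (phi := phi)) => //.
  exact: DPdel0.
- have nyD0 : var y \notin varC D0.
    apply/negP => /varCP [z zD ez]; move: nyK; rewrite eK => /negP; apply.
    apply/varCP; exists z => //; by rewrite Dp_mem // zD ez nv.
  case: (sat_use SF D0F yF nyD0) => phi [S e]; rewrite eK; apply: (sat_make (phi := phi)) => //.
  exact: DPdel1.
Qed.


Section Bwd.
Hypothesis Hb : forall D, D \in F -> compl x \in D -> Cp `<=` Dp D.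
Hypothesis Hc : forall E, E \in F -> v \notin varC E -> ~ (Cp `<=` E).

Lemma DpF0 D E : D \in F -> compl x \in D -> E \in F -> v \notin varC E -> E != Dp D.
Proof. move=> DF xD EF nE; apply/eqP => e; apply: (Hc EF nE); rewrite e; exact: Hb. Qed.

Lemma Lbwd phi K E : satisfies phi (DP v F `\ K) -> E \in F ->
  (E = C \/ (compl x \in E /\ Dp E != K) \/ (v \notin varC E /\ E != K)) ->
  satc (upd phi x.2) E.
Proof.
move=> S EF [->|[[xE0 nE]|[nE nEK]]].
- exact: upd_x.
- apply: (satc_sub (Dp_sub E)); apply/(upd_Dp _ _ EF xE0); apply: S.
  rewrite in_fsetD1 nE /=; apply/(dp_mem Hb); right; by exists E.
- apply/(upd_nov _ _ (fun z zK => nov_F0 nE zK)); apply: S.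
  rewrite in_fsetD1 nEK /=; apply/(dp_mem Hb); by left.
Qed.

Lemma LbwdF0 phi K : K \in F -> v \notin varC K -> satisfies phi (DP v F `\ K) ->
  satisfies (upd phi x.2) (F `\ K).
Proof.
move=> KF nK S E; rewrite in_fsetD1 => /andP[nEK EF]; apply: (Lbwd S EF).
case: (part EF) => [->|[xE0|nE]]; [by left | right; left | right; right]; split => //.
by rewrite eq_sym; apply: DpF0.
Qed.

Lemma LbwdS phi K : K \in F -> compl x \in K -> satisfies phi (DP v F `\ Dp K) ->
  satisfies (upd phi x.2) (F `\ K).
Proof.
move=> KF xK S E; rewrite in_fsetD1 => /andP[nEK EF]; apply: (Lbwd S EF).
case: (part EF) => [->|[xE0|nE]]; [by left | right; left | right; right]; split => //.
- apply/eqP => e; move: nEK; by rewrite (Dp_inj xE0 xK e) eqxx.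
- exact: DpF0.
Qed.

Lemma LbwdC phi D0 : D0 \in F -> compl x \in D0 -> satisfies phi (DP v F `\ Dp D0) ->
  satisfies (upd phi (~~ x.2)) (F `\ C).
Proof.
move=> D0F xD0 S E; rewrite in_fsetD1 => /andP[nEK EF].
case: (part EF) => [eE|[xE0|nE]]; first by rewrite eE eqxx in nEK.
- exact: upd_nx.
- apply/(upd_nov _ _ (fun z zK => nov_F0 nE zK)); apply: S.
  rewrite in_fsetD1 (DpF0 D0F xD0 EF nE) /=; apply/(dp_mem Hb); by left.
Qed.

Lemma lit_pick (G : cset V) K z : saturated_MU G -> K \in G -> z \notin K ->
  var z \in varF G -> exists phi, satisfies phi (G `\ K) /\ phi (var z) = z.2.
Proof.
move=> SG KG nz zG; have [MG _] := SG; have [UG _] := MG.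
case: (boolP (compl z \in K)) => cz.
- case: (mu_del MG KG) => phi S; exists phi; split => //.
  have ns := unsat_del UG KG S.
  case: (boolP (phi (var z) == z.2)) => [/eqP //|ne]; exfalso; apply: ns.
  exists (compl z) => //; exact: lit_tf.
- apply: (sat_use SG KG zG); apply/negP => /varCP [w wK ew].
  case: (lit_eqv ew) => e'; move: wK; rewrite e' => h; [by rewrite h in nz | by rewrite h in cz].
Qed.

End Bwd.

Lemma bwd : saturated_MU (DP v F) ->
  (forall y, y \in Cp <-> (forall D, D \in F -> compl x \in D -> y \in Dp D)) ->
  (forall E, E \in F -> v \notin varC E -> ~ (Cp `<=` E)) -> saturated_MU F.
Proof.
move=> SD Hiff Hc; have [MD _] := SD; have [UD _] := MD.
have Hb : forall D, D \in F -> compl x \in D -> Cp `<=` Dp D.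
  move=> D DF xD; apply/fsubsetP => y /Hiff H; exact: H D DF xD.
have U : ~ satisfiable F.
  move=> [phi S]; apply: UD; exists phi => K /(dp_mem Hb)[[KF nK]|[D [DF xD] ->]]; first exact: S.
  case: (boolP (phi v == x.2)) => [/eqP pv|pv].
  - apply: D_of_sat => //; exact: S.
  - apply: (satc_sub (Hb _ DF xD)); apply: Cp_of_sat; first exact: S HC.
    by move: pv; case: (phi v); case: (x.2).
case: exS => D0 D0F xD0.
have D0DP : Dp D0 \in DP v F by apply/(dp_mem Hb); right; exists D0.
split.
  apply: mu_make => // K KF; case: (part KF) => [eK|[xK|nK]].
  - case: (mu_del MD D0DP) => phi S; exists (upd phi (~~ x.2)); rewrite eK.
    exact: (LbwdC Hb Hc D0F xD0 S).
  - have KDP : Dp K \in DP v F by apply/(dp_mem Hb); right; exists K.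
    case: (mu_del MD KDP) => phi S; exists (upd phi x.2); exact: (LbwdS Hb Hc KF xK S).
  - have KDP : K \in DP v F by apply/(dp_mem Hb); left.
    case: (mu_del MD KDP) => phi S; exists (upd phi x.2); exact: (LbwdF0 Hb Hc KF nK S).
move=> K y KF yF nyK.
case: (part KF) => [eK|[xK|nK]].
- rewrite eK in nyK *.
  have nv : var y != v by apply/eqP => e; move: nyK; rewrite e vC.
  have yDP := varDP2 Hb yF nv.
  have nyC : y \notin Cp.
    apply/negP; rewrite Cp_mem => /andP[yC _]; move: nyK => /negP; apply.
    apply/varCP; by exists y.
  have [D1 [D1F xD1 nyD1]] : exists D1, [/\ D1 \in F, compl x \in D1 & y \notin Dp D1].
    apply: NNPP => h; move/negP: nyC; apply; apply/Hiff => D DF xD.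
    apply/negPn/negP => nyD; apply: h; by exists D.
  have D1DP : Dp D1 \in DP v F by apply/(dp_mem Hb); right; exists D1.
  case: (lit_pick SD D1DP nyD1 yDP) => phi [S e].
  apply: (sat_make (phi := upd phi (~~ x.2))); first exact: (LbwdC Hb Hc D1F xD1 S).
  by rewrite /upd (negbTE nv).
- have nv : var y != v by apply/eqP => e; move: nyK; rewrite e (vside xK).
  have nyDp : var y \notin varC (Dp K).
    apply/negP => /varCP [z zK ez]; move: nyK => /negP; apply; apply/varCP; exists z => //.
    by move: zK; rewrite Dp_mem // => /andP[].
  have KDP : Dp K \in DP v F by apply/(dp_mem Hb); right; exists K.
  case: (sat_use SD KDP (varDP2 Hb yF nv) nyDp) => phi [S e].
  apply: (sat_make (phi := upd phi x.2)); first exact: (LbwdS Hb Hc KF xK S).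
  by rewrite /upd (negbTE nv).
- have KDP : K \in DP v F by apply/(dp_mem Hb); left.
  case: (boolP (var y == v)) => [/eqP yv|nv].
  + case: (lit_eqv (etrans yv (esym Hxv))) => ey; rewrite ey.
    * case: (mu_del MD KDP) => phi S.
      apply: (sat_make (phi := upd phi x.2)); first exact: (LbwdF0 Hb Hc KF nK S).
      by rewrite /upd Hxv eqxx.
    * have : ~~ (Cp `<=` K) by apply/negP; exact: Hc.
      move=> /fsubsetPn [z zC nzK]; move: (zC); rewrite Cp_mem => /andP[zC0 nvz].
      have zDP : var z \in varF (DP v F).
        apply: (varDP2 Hb _ nvz); apply/varFP; exists C => //; apply/varCP; by exists z.
      case: (lit_pick SD KDP nzK zDP) => phi [S e].
      apply: (sat_make (phi := upd phi (~~ x.2))); last by rewrite /upd var_cx eqxx.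
      move=> E; rewrite in_fsetD1 => /andP[nEK EF]; case: (part EF) => [->|[xE0|nE]].
      -- exists z => //; by rewrite /upd (negbTE nvz).
      -- exact: upd_nx.
      -- apply/(upd_nov _ _ (fun w wK => nov_F0 nE wK)); apply: S.
         rewrite in_fsetD1 nEK /=; apply/(dp_mem Hb); by left.
  + case: (sat_use SD KDP (varDP2 Hb yF nv) nyK) => phi [S e].
    apply: (sat_make (phi := upd phi x.2)); first exact: (LbwdF0 Hb Hc KF nK S).
    by rewrite /upd (negbTE nv).
Qed.


Lemma main_iff : saturated_MU F <->
   [/\ saturated_MU (DP v F),
       (forall y, y \in C `\ x <->
          (forall D, D \in F -> compl x \in D -> y \in D `\ compl x))
     & (forall E, E \in F -> v \notin varC E -> ~ (C `\ x `<=` E))].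
Proof.
split.
- move=> SF; split; first exact: fwd.
  + move=> y; split; first by move=> yC D DF xD; exact: b1.
    exact: b2.
  + move=> E EF nE sub; exact: (c1 SF EF nE sub).
- case=> SD Hiff Hc; exact: bwd.
Qed.

End Main.

Theorem lemma12 (V : choiceType) (F : cset V) (v : V) (x : lit V) (C : clause V) :
  is_clause_set F ->
  singular F v ->
  var x = v ->
  ldeg F x = 1%N ->
  C \in F -> x \in C ->
  (saturated_MU F <->
   [/\ saturated_MU (DP v F),
       (forall y, y \in C `\ x <->
          (forall D, D \in F -> compl x \in D -> y \in D `\ compl x))
     & (forall E, E \in F -> v \notin varC E -> ~ (C `\ x `<=` E))]).
Proof. move=> Hcl Hsing Hxv Hdeg HC HxC; exact: main_iff. Qed.
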